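(* Let $M$ be a matroid flock on a finite set $E$, let $g=g^M$ and $f:=g^\bullet$, and let $\alpha,\omega\in\mathbb{Z}^E$. The following are equivalent: (1) $\omega^T\alpha=f(\omega)+g(\alpha)$; (2) $\omega=e_B$ for some basis $B$ of $M_\alpha$.
   Context: $e_I:=\sum_{i\in I}e_i$ ($e_i$ unit vectors), $\mathbf{1}:=e_E$. A matroid flock of rank $d$ on $E$ is a map $M$ assigning to each $\alpha\in\mathbb{Z}^E$ a matroid $M_\alpha$ on $E$ of rank $d$ with (MF1) $M_\alpha/i=M_{\alpha+e_i}\setminus i$ for all $\alpha$, $i$ (contraction, deletion); and (MF2) $M_\alpha=M_{\alpha+\mathbf{1}}$. With $r_\alpha$ the rank function of $M_\alpha$, $g^M$ is the unique function $g:\mathbb{Z}^E\to\mathbb{Z}$ with $g(0)=0$ and $g(\alpha+e_I)=g(\alpha)+r_\alpha(I)$ for all $\alpha,I$. For $h:\mathbb{Z}^E\to\mathbb{Z}\cup\{\infty\}$ with some finite value, the Legendre–Fenchel dual is $h^\bullet(x):=\sup\{x^Ty-h(y):y\in\mathbb{Z}^E\}$. *)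

(* Defs.v *)
From Stdlib Require Import ClassicalEpsilon.
From mathcomp Require Import all_boot all_order all_algebra.
Set Implicit Arguments. Unset Strict Implicit. Unset Printing Implicit Defensive.
Import Order.TTheory GRing.Theory Num.Theory.
Local Open Scope ring_scope.

Section Defs.
Variable E : finType.

Definition zvec := {ffun E -> int}.

Definition eI (I : {set E}) : zvec := [ffun i => ((i \in I) : nat)%:Z].
Definition one_vec : zvec := eI setT.
Definition eunit (i : E) : zvec := eI [set i].
Definition vadd (a b : zvec) : zvec := [ffun i => a i + b i].
Definition zero_vec : zvec := [ffun _ => 0].
Definition dot (x y : zvec) : int := \sum_(i : E) x i * y i.

Definition is_matroid (Bs : {set {set E}}) : Prop :=
  Bs != set0 /\
  forall B1 B2, B1 \in Bs -> B2 \in Bs -> forall x, x \in B1 :\: B2 ->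
    exists2 y, y \in B2 :\: B1 & (B1 :\ x) :|: [set y] \in Bs.

Definition mrank (Bs : {set {set E}}) (I : {set E}) : nat :=
  (\max_(B in Bs) #|I :&: B|)%N.

(** Deletion M \ i and contraction M / i, both matroids on E \ {i},
    represented by their sets of bases (subsets of E \ {i}). *)
Definition mdelete (Bs : {set {set E}}) (i : E) : {set {set E}} :=
  if [forall B in Bs, i \in B] (* i coloop *)
  then [set B :\ i | B in Bs]
  else [set B in Bs | i \notin B].
Definition mcontract (Bs : {set {set E}}) (i : E) : {set {set E}} :=
  if [forall B in Bs, i \notin B] (* i loop *)
  then Bs
  else [set B :\ i | B in [set B in Bs | i \in B]].

Definition matroid_flock (d : nat) (M : zvec -> {set {set E}}) : Prop :=
  (forall a, is_matroid (M a) /\ forall B, B \in M a -> #|B| = d) /\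
  (forall a i, mcontract (M a) i = mdelete (M (vadd a (eunit i))) i) /\
  (forall a, M a = M (vadd a one_vec)).

Definition is_gM (M : zvec -> {set {set E}}) (g : zvec -> int) : Prop :=
  g zero_vec = 0 /\
  forall a (I : {set E}), g (vadd a (eI I)) = g a + (mrank (M a) I)%:Z.

Definition is_LF_sup (h : zvec -> int) (x : zvec) (v : int) : Prop :=
  (forall y, dot x y - h y <= v) /\
  (forall u, (forall y, dot x y - h y <= u) -> v <= u).

(** h^•(x) in Z ∪ {∞}, with None standing for +∞
    (for integer-valued h, the sup is either attained-bounded or +∞). *)
Definition LFdual (h : zvec -> int) (x : zvec) : option int :=
  match excluded_middle_informative (exists v, is_LF_sup h x v) with
  | left H => Some (proj1_sig (constructive_indefinite_description _ H))
  | right _ => None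
  end.

End Defs.

(* Main.v *)
Require Import Defs.
From mathcomp Require Import all_boot all_order all_algebra.
From mathcomp Require Import zify ring.
From Stdlib Require Import Lia ClassicalEpsilon.
Import Order.TTheory GRing.Theory Num.Theory.
Set Implicit Arguments. Unset Strict Implicit.
Local Open Scope ring_scope.

Section Helpers.
Variable E : finType.
Implicit Types (B I : {set E}) (w x y a : zvec E).

Lemma dot_eIl B x : dot (eI B) x = \sum_(j in B) x j.
Proof.
rewrite /dot [RHS]big_mkcond /=; apply: eq_bigr => j _; rewrite ffunE.
by case: (j \in B); rewrite /= ?mul1r ?mul0r.
Qed.

Lemma dot_eIr B x : dot x (eI B) = \sum_(j in B) x j.
Proof.
rewrite /dot [RHS]big_mkcond /=; apply: eq_bigr => j _; rewrite ffunE.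
by case: (j \in B); rewrite /= ?mulr1 ?mulr0.
Qed.

Lemma dot_addr x a b : dot x (vadd a b) = dot x a + dot x b.
Proof. by rewrite /dot -big_split /=; apply: eq_bigr => j _; rewrite ffunE mulrDr. Qed.

Lemma sum_eI I B : \sum_(j in I) eI B j = (#|I :&: B|)%:Z.
Proof.
rewrite (eq_bigr (fun j => ((j \in B) : nat)%:Z)); last by move=> j _; rewrite ffunE.
rewrite -(big_morph Posz PoszD (erefl (Posz 0))); congr Posz.
rewrite -big_mkcondr /= sum1_card; apply: eq_card => j; by rewrite !inE.
Qed.

Lemma mrank_le (Bs : {set {set E}}) I m :
  (forall B, B \in Bs -> (#|I :&: B| <= m)%N) -> (mrank Bs I <= m)%N.
Proof. by move=> H; apply/bigmax_leqP => B HB; apply: H. Qed.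

Lemma mrank_ge (Bs : {set {set E}}) I B : B \in Bs -> (#|I :&: B| <= mrank Bs I)%N.
Proof. by move=> HB; rewrite /mrank; apply: (@leq_bigmax_cond _ (fun B => B \in Bs) (fun B => #|I :&: B|) B HB). Qed.

End Helpers.

Section Flock.
Variables (E : finType) (d : nat) (M : zvec E -> {set {set E}}) (g : zvec E -> int).
Hypothesis HM : matroid_flock d M.
Hypothesis Hg : is_gM M g.

Lemma card_basis a B : B \in M a -> #|B| = d.
Proof. by case: HM => H _; case: (H a) => _; apply. Qed.

Lemma basis_ex a : exists B, B \in M a.
Proof. by case: HM => H _; case: (H a) => [[/set0Pn [B HB] _] _]; exists B. Qed.

Lemma basis_exch a B1 B2 x : B1 \in M a -> B2 \in M a -> x \in B1 :\: B2 ->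
  exists2 y, y \in B2 :\: B1 & (B1 :\ x) :|: [set y] \in M a.
Proof. by case: HM => H _; case: (H a) => [[_ Hx] _] H1 H2 H3; apply: (Hx _ _ H1 H2 x H3). Qed.

Lemma mrankT a : mrank (M a) setT = d.
Proof.
apply/eqP; rewrite eqn_leq; apply/andP; split.
  by apply: mrank_le => B HB; rewrite setTI (card_basis HB).
by case: (basis_ex a) => B HB; rewrite -(card_basis HB) -{1}(setTI B); apply: mrank_ge.
Qed.

Lemma card_D1 (B : {set E}) i : i \in B -> #|B :\ i| = (#|B| - 1)%N.
Proof. by move=> Hi; rewrite (cardsD1 i B) Hi /=; lia. Qed.

Lemma loop_case c i : (forall B, B \in M c -> i \notin B) ->
  forall B, B \in M (vadd c (eunit i)) ->
  (i \notin B -> B \in M c) /\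
  (i \in B -> exists2 y0, y0 \notin B & (B :\ i) :|: [set y0] \in M c).
Proof.
move=> Hl B HB.
have MF1 := (proj1 (proj2 HM)) c i.
have Hf : [forall B in M c, i \notin B] by apply/forall_inP.
rewrite /mcontract Hf /mdelete in MF1.
case: ifP MF1 => Hf2 MF1.
  exfalso; case: (basis_ex (vadd c (eunit i))) => B1 HB1.
  have : B1 :\ i \in M c by rewrite MF1; apply: imset_f.
  move/card_basis; rewrite card_D1; last by move/forall_inP: Hf2; apply.
  rewrite (card_basis HB1); have := card_basis HB1.
  move/forall_inP: Hf2 => /(_ _ HB1) Hi1; have : (0 < #|B1|)%N by apply/card_gt0P; exists i.
  lia.
split; first by move=> HiB; rewrite MF1 inE HB HiB.
move=> HiB.
move/negbT/forall_inPn: Hf2 => [B2 HB2 HiB2].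
have [y Hy Hin] := basis_exch HB HB2 (x:=i) (ltac:(by rewrite inE HiB andbT)).
move: Hy; rewrite inE => /andP [HyB HyB2].
exists y => //; rewrite MF1 inE Hin !inE eqxx /=.
by apply/eqP => Eyi; move: HiB2; rewrite Eyi HyB2.
Qed.

Lemma nonloop_case c i B0 : B0 \in M c -> i \in B0 ->
  forall B, B \in M (vadd c (eunit i)) -> i \in B /\ B \in M c.
Proof.
move=> HB0 Hi0 B HB.
have MF1 := (proj1 (proj2 HM)) c i.
have Hf : [forall B in M c, i \notin B] = false.
  by apply/negbTE/forall_inPn; exists B0 => //; rewrite Hi0.
rewrite /mcontract Hf /mdelete in MF1.
case: ifP MF1 => Hf2 MF1.
  move/forall_inP: Hf2 => Hf2; have HiB := Hf2 _ HB; split => //.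
  have : B :\ i \in [set B :\ i | B in M (vadd c (eunit i))] by apply: imset_f.
  rewrite -MF1 => /imsetP [B1]; rewrite inE => /andP [HB1 HiB1] EB.
  by rewrite -(setD1K HiB) EB setD1K.
exfalso.
have : B0 :\ i \in [set B :\ i | B in [set B in M c | i \in B]].
  by apply: imset_f; rewrite inE HB0 Hi0.
rewrite MF1 inE => /andP [/card_basis H1 _].
move: H1; rewrite card_D1 // (card_basis HB0).
have : (0 < #|B0|)%N by apply/card_gt0P; exists i.
rewrite (card_basis HB0); lia.
Qed.


Lemma shift c (a : zvec E) : g [ffun j => a j + c%:Z] = g a + (c * d)%:Z /\ M [ffun j => a j + c%:Z] = M a.
Proof.
elim: c => [|c [IH1 IH2]].
  have -> : [ffun j => a j + 0%:Z] = a by apply/ffunP => j; rewrite ffunE addr0.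
  by rewrite mul0n addr0.
have -> : [ffun j => a j + c.+1%:Z] = vadd [ffun j => a j + c%:Z] (one_vec E).
  by apply/ffunP => j; rewrite !ffunE in_setT /= -addrA -PoszD addn1.
split.
  rewrite /one_vec (proj2 Hg) mrankT IH1 -addrA -PoszD; congr (_ + Posz _); lia.
by rewrite -(proj2 (proj2 HM)).
Qed.

Lemma sum_noti (S : {set E}) (f h : E -> int) i : i \notin S ->
  (forall j, j != i -> f j = h j) -> \sum_(j in S) f j = \sum_(j in S) h j.
Proof.
move=> HiS Hfh; apply: eq_bigr => j Hj; apply: Hfh.
by apply/eqP => Eji; move: HiS; rewrite -Eji Hj.
Qed.

Lemma keyR n : forall w : zvec E, (forall j, 0 <= w j) -> \sum_j w j = n%:Z ->
  forall y (B : {set E}), B \in M (vadd y w) -> g (vadd y w) - g y <= \sum_(j in B) w j.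
Proof.
elim: n => [|n IH] w Hw Hs y B HB.
  have Hz := psumr_eq0P (fun j _ => Hw j) Hs.
  have -> : vadd y w = y by apply/ffunP => j; rewrite ffunE Hz // addr0.
  by rewrite subrr; apply: sumr_ge0.
have [i0 Hi0] : exists i0, w i0 != 0.
  case: (pickP (fun j => w j != 0)) => [i0 Hi0|Hn]; first by exists i0.
  exfalso; move: Hs; rewrite big1 // => j _; exact/eqP/negbFE/Hn.
case: (@arg_maxnP _ i0 predT (fun j => `|w j|%N) isT) => i _ Hmax.
have Hmax' : forall j, w j <= w i.
  move=> j; have := Hmax j isT; have := Hw j; have := Hw i; lia.
have Hwi : 1 <= w i by have := Hmax' i0; have := Hw i0; move: Hi0; lia.
set w' := [ffun j => w j - eunit i j].
have Ew' : forall j, w' j = w j - ((j == i) : nat)%:Z by move=> j; rewrite !ffunE in_set1.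
have Hw' : forall j, 0 <= w' j.
  move=> j; rewrite Ew'; case: eqP => [->|_] /=; have := Hw j; lia.
have Hs' : \sum_j w' j = n%:Z.
  rewrite (bigD1 i) //= in Hs; rewrite (bigD1 i) //= Ew' eqxx /=.
  rewrite (eq_bigr (fun j => w j)) => [|j Hj]; last by rewrite Ew' (negbTE Hj) subr0.
  move: Hs; set s := (\sum_(_ | _) _); lia.
set c := vadd y w'.
have Ec : vadd y w = vadd c (eunit i).
  by apply/ffunP => j; rewrite !ffunE -addrA subrK.
have IH' := IH w' Hw' Hs' y.
rewrite Ec in HB *; rewrite /eunit (proj2 Hg) -/(eunit i).
have Sw : forall S : {set E}, i \notin S -> \sum_(j in S) w' j = \sum_(j in S) w j.
  move=> S HS; apply: eq_bigr => j Hj; have Hji : j != i by apply/eqP => Eji; move: HS; rewrite -Eji Hj.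
  by rewrite Ew' (negbTE Hji) subr0.
case: (boolP [exists B0 in M c, i \in B0]).
  case/exists_inP => B0 HB0 Hi0B0.
  have [HiB HBc] := nonloop_case HB0 Hi0B0 HB.
  have Hr : (mrank (M c) [set i] <= 1)%N.
    apply: mrank_le => B1 _; rewrite -(cards1 i); apply: subset_leq_card; apply: subsetIl.
  have := IH' _ HBc; rewrite (big_setD1 i HiB) [X in _ -> _ <= X](big_setD1 i HiB) /=.
  rewrite Sw ?setD11 // Ew' eqxx /=.
  move: Hr; rewrite -/c; set s := \sum_(j in B :\ i) w j; set m := mrank _ _; set G := g c; lia.
move/exists_inPn => Hl.
have Hr : mrank (M c) [set i] = 0%N.
  apply/eqP; rewrite -leqn0; apply: mrank_le => B1 HB1.
  rewrite leqn0 cards_eq0; apply/eqP/setP => j; rewrite !inE.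
  by case: eqP => // ->; rewrite (negbTE (Hl _ HB1)).
rewrite Hr addr0.
have [L1 L2] := loop_case Hl HB.
case: (boolP (i \in B)) => HiB.
  have [y0 Hy0 HB'] := L2 HiB.
  have Hy0i : y0 != i by apply/eqP => E0; move: Hy0; rewrite E0 HiB.
  have := IH' _ HB'; rewrite setUC big_setU1 /=; last by rewrite !inE negb_and Hy0 orbT.
  rewrite Sw ?setD11 // Ew' (negbTE Hy0i) subr0 (big_setD1 i HiB) /=.
  rewrite -/c; set s := \sum_(j in B :\ i) w j; set G := g c; have := Hmax' y0; lia.
have := IH' _ (L1 HiB); rewrite Sw //.
Qed.

End Flock.

Lemma key_ineq (E : finType) (d : nat) (M : zvec E -> {set {set E}})
  (g : zvec E -> int) (alpha : zvec E) (B : {set E}) :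
  matroid_flock d M -> is_gM M g -> B \in M alpha ->
  forall y, dot (eI B) y - g y <= dot (eI B) alpha - g alpha.
Proof.
move=> HM Hg HB y.
set c := (\max_j `|alpha j - y j|%N)%N.
have Hc : forall j, 0 <= alpha j - y j + c%:Z.
  move=> j; have : (`|alpha j - y j|%N <= c)%N.
    by apply: (@leq_bigmax_cond _ predT (fun j => `|alpha j - y j|%N) j).
  set u := alpha j - y j; lia.
set y' : zvec E := [ffun j => y j - c%:Z].
set w : zvec E := [ffun j => alpha j - y j + c%:Z].
have Hw : forall j, 0 <= w j by move=> j; rewrite ffunE.
have Ea : vadd y' w = alpha by apply/ffunP => j; rewrite !ffunE; ring.
have Ey : [ffun j => y' j + c%:Z] = y by apply/ffunP => j; rewrite !ffunE; ring.
have [Hsh _] := shift HM Hg c y'; rewrite Ey in Hsh.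
have Hsum : \sum_j w j = (absz (\sum_j w j))%:Z by rewrite gez0_abs //; apply: sumr_ge0.
have := keyR HM Hg Hw Hsum; move=> /(_ y' B); rewrite Ea => /(_ HB).
have -> : \sum_(j in B) w j = \sum_(j in B) alpha j - \sum_(j in B) y j + (c * #|B|)%:Z.
  rewrite (eq_bigr (fun j => (alpha j - y j) + c%:Z)); last by move=> j _; rewrite ffunE.
  by rewrite big_split sumrB /= sumr_const -mulr_natr natz -PoszM.
rewrite (card_basis HM HB) !dot_eIl Hsh.
set s1 := \sum_(j in B) alpha j; set s2 := \sum_(j in B) y j; set G := g y'.
lia.
Qed.

Theorem mainTheorem13 (E : finType) (d : nat) (M : zvec E -> {set {set E}})
  (g : zvec E -> int) (alpha omega : zvec E) :
  matroid_flock d M -> is_gM M g ->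
  (Some (dot omega alpha) = omap (fun v => v + g alpha) (LFdual g omega)
   <-> exists2 B, B \in M alpha & omega = eI B).
Proof.
move=> HM Hg; split; last first.
  case=> B HB ->; have Hk := key_ineq HM Hg HB.
  rewrite /LFdual; case: excluded_middle_informative => [H|H].
    case: constructive_indefinite_description => v [Hv1 Hv2] /=; congr Some.
    have h1 := Hv2 _ Hk; have h2 := Hv1 alpha.
    set G := g alpha; set D := dot (eI B) alpha; set DD := dot (eI B) alpha - G in h1 *.
    lia.
  exfalso; apply: H; exists (dot (eI B) alpha - g alpha); split => //.
rewrite /LFdual; case: excluded_middle_informative => [H|//].
case: constructive_indefinite_description => v [Hv1 _] /= [Ev].
have Hmax : forall y, dot omega y - g y <= dot omega alpha - g alpha.
  move=> y; have := Hv1 y; rewrite Ev; set G := g alpha; set D := dot omega y - g y; lia.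
have Hup : forall I : {set E}, \sum_(j in I) omega j <= (mrank (M alpha) I)%:Z.
  move=> I; have := Hmax (vadd alpha (eI I)); rewrite dot_addr dot_eIr (proj2 Hg).
  set s := \sum_(j in I) omega j; set G := g alpha; set D := dot omega alpha; lia.
have Hlow : forall I : {set E}, exists a, (mrank (M a) I)%:Z <= \sum_(j in I) omega j.
  move=> I; set a : zvec E := [ffun j => alpha j - eI I j]; exists a.
  have Ea : vadd a (eI I) = alpha by apply/ffunP => j; rewrite !ffunE subrK.
  have h1 := (proj2 Hg) a I; rewrite Ea in h1.
  have h2 := dot_addr omega a (eI I); rewrite Ea dot_eIr in h2.
  have := Hmax a; rewrite h1 h2.
  set s := \sum_(j in I) omega j; set G := g a; set D := dot omega a; lia.
have H01 : forall i, 0 <= omega i <= 1.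
  move=> i; have := Hup [set i]; have [a] := Hlow [set i]; rewrite !big_set1.
  have : (mrank (M alpha) [set i] <= 1)%N.
    apply: mrank_le => B1 _; rewrite -(cards1 i); apply: subset_leq_card; apply: subsetIl.
  set m1 := mrank _ _; set m2 := mrank _ _; lia.
set B := [set j | omega j == 1].
have Eo : omega = eI B.
  apply/ffunP => j; rewrite ffunE inE; have := H01 j.
  case: eqP => [-> //|]; set u := omega j; lia.
have [B' HB' EB'] : {B' | B' \in M alpha & mrank (M alpha) B = #|B :&: B'|}.
  apply: eq_bigmax_cond; case: (basis_ex HM alpha) => B0 HB0; apply/card_gt0P; by exists B0.
have := Hup B; rewrite EB' Eo sum_eI setIid => /= HBc.
have Hsub : B \subset B'.
  apply/setIidPl/eqP; rewrite eqEcard subsetIl /=; exact: HBc.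
have [a Ha] := Hlow setT; move: Ha; rewrite (mrankT HM) Eo sum_eI setTI => /= Hd.
exists B' => //; congr eI; apply/eqP; rewrite eqEcard Hsub (card_basis HM HB') /=; exact: Hd.
Qed.
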